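(* Let PS1 and PS2 be two pure strategies (transition matrices $P_1$, $P_2$ on the finite population set $\mathcal{S}$, as described in the context), where the expected hitting time $m_{PS1}(X)$ of PS1 is finite for every $X\in\mathcal{S}$. Then the following are equivalent: (i) PS2 is complementary to PS1, i.e. there exists $X\in\mathcal{S}_{\mathrm{non}}$ with $\Delta_{PS1}(X)<\Delta_{PS2}(X)$; (ii) there exists a mixed strategy MS derived from PS1 and PS2 such that $m_{MS}(X)\le m_{PS1}(X)$ for every initial population $X\in\mathcal{S}$ and $m_{MS}(X)<m_{PS1}(X)$ for some initial population $X\in\mathcal{S}$. Furthermore, (i) is also equivalent to: (iii) there exists a mixed strategy MS derived from PS1 and PS2 such that the expected runtime of MS is no more than that of PS1 for every initial population $X$, and strictly less than that of PS1 for some initial population $X$.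
   Context: A fitness function $f$ on a finite set is to be maximised; its optimal solutions are its maximisers. A metaheuristic generates a sequence of populations $\Phi_0,\Phi_1,\Phi_2,\dots$ (a population is a finite collection of candidate solutions). Let $\mathcal{S}$ be the finite set of all populations, $\mathcal{S}_{\mathrm{opt}}\subseteq\mathcal{S}$ the populations containing at least one optimal solution, and $\mathcal{S}_{\mathrm{non}}=\mathcal{S}\setminus\mathcal{S}_{\mathrm{opt}}$. The sequence is modelled as a time-homogeneous Markov chain on $\mathcal{S}$ with transition probabilities $P(X,Y)=\Pr(\Phi_{t+1}=Y\mid\Phi_t=X)$, in which every state of $\mathcal{S}_{\mathrm{opt}}$ is absorbing. The expected hitting time $m(X)\in[0,\infty]$ is the expected number of generations until the chain first enters $\mathcal{S}_{\mathrm{opt}}$ when $\Phi_0=X$ (so $m(X)=0$ for $X\in\mathcal{S}_{\mathrm{opt}}$). Each generation uses the same fixed number of fitness evaluations (the same for all algorithms compared), and the expected runtime (expected total number of fitness evaluations until an optimal solution is found) equals the expected hitting time times this number. A pure strategy is a transition matrix (independent of $t$) of this kind. Let PS1 and PS2 be pure strategies with transition matrices $P_1,P_2$ on the same $\mathcal{S}$ (with $\mathcal{S}_{\mathrm{opt}}$ absorbing for both), and expected hitting times $m_{PS1},m_{PS2}$. A mixed strategy MS derived from PS1 and PS2 assigns to each population $X$ probabilities $P_X(PS1)\in[0,1]$ and $P_X(PS2)=1-P_X(PS1)$; when the current population is $X$, PS1 is applied with probability $P_X(PS1)$ and PS2 otherwise, so MS has transition matrix $P_{MS}(X,Y)=P_X(PS1)P_1(X,Y)+P_X(PS2)P_2(X,Y)$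 and expected hitting time $m_{MS}$. With the distance function $d(X)=m_{PS1}(X)$, the drifts are defined for $X\in\mathcal{S}_{\mathrm{non}}$ by $\Delta_{PS1}(X)=d(X)-\sum_{Y\in\mathcal{S}_{\mathrm{non}}}P_1(X,Y)d(Y)$ and $\Delta_{PS2}(X)=d(X)-\sum_{Y\in\mathcal{S}_{\mathrm{non}}}P_2(X,Y)d(Y)$. *)

(* Defs.v *)
From HB Require Import structures.
From mathcomp Require Import all_boot all_order all_algebra.
From mathcomp Require Import all_classical all_reals ereal sequences.
Set Implicit Arguments. Unset Strict Implicit. Unset Printing Implicit Defensive.
Import Order.TTheory GRing.Theory Num.Theory.
Local Open Scope ring_scope.

Section Defs.
Variables (R : realType) (S : finType).

Definition stochastic (P : S -> S -> R) : Prop :=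
  (forall X Y, 0 <= P X Y) /\ (forall X, \sum_(Y : S) P X Y = 1).

Definition absorbing (opt : {set S}) (P : S -> S -> R) : Prop :=
  forall X, X \in opt -> P X X = 1.

(* notHit opt P t X = Pr(Phi_0,...,Phi_t all lie outside opt | Phi_0 = X)
   = Pr(T > t | Phi_0 = X), T the first hitting time of opt. *)
Fixpoint notHit (opt : {set S}) (P : S -> S -> R) (t : nat) (X : S) : R :=
  match t with
  | 0 => if X \in opt then 0 else 1
  | t'.+1 => if X \in opt then 0 else \sum_(Y : S) P X Y * notHit opt P t' Y
  end.

(* expected hitting time E[T | Phi_0 = X] = sum_{t>=0} Pr(T > t), in [0, +oo] *)
Definition hitting_time (opt : {set S}) (P : S -> S -> R) (X : S) : \bar R :=
  (\sum_(t <oo) (notHit opt P t X)%:E)%E.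

(* expected runtime: c fitness evaluations per generation *)
Definition runtime (c : nat) (opt : {set S}) (P : S -> S -> R) (X : S) : \bar R :=
  (hitting_time opt P X * (c%:R)%:E)%E.

Definition drift (opt : {set S}) (P : S -> S -> R) (d : S -> R) (X : S) : R :=
  d X - \sum_(Y in ~: opt) P X Y * d Y.

Definition mixed (p : S -> R) (P1 P2 : S -> S -> R) : S -> S -> R :=
  fun X Y => p X * P1 X Y + (1 - p X) * P2 X Y.

End Defs.

(* Main.v *)
Require Import Defs.
From HB Require Import structures.
From mathcomp Require Import all_boot all_order all_algebra.
From mathcomp Require Import all_classical all_reals ereal sequences.
From mathcomp Require Import normedtype.
Import Order.TTheory GRing.Theory Num.Theory.
Local Open Scope ring_scope.
Set Implicit Arguments. Unset Strict Implicit.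

Section Helpers.
Variables (R : realType) (S : finType) (opt : {set S}) (Q : S -> S -> R).
Hypothesis Q0 : forall X Y, 0 <= Q X Y.

Definition gsum n X := \sum_(0 <= t < n) notHit opt Q t X.

Lemma notHit_ge0 t X : 0 <= notHit opt Q t X.
Proof.
elim: t X => [|t IH] X /=; case: ifP => // _.
by apply: sumr_ge0 => Y _; rewrite mulr_ge0.
Qed.

Lemma notHit_opt t X : X \in opt -> notHit opt Q t X = 0.
Proof. by case: t => [|t] /= ->. Qed.

Lemma gsum0 X : gsum 0 X = 0.
Proof. by rewrite /gsum big_geq. Qed.

Lemma gsum_ge0 n X : 0 <= gsum n X.
Proof. by apply: sumr_ge0 => t _; apply: notHit_ge0. Qed.

Lemma gsumS n X : gsum n.+1 X =
  if X \in opt then 0 else 1 + \sum_Y Q X Y * gsum n Y.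
Proof.
rewrite /gsum big_nat_recl //=; case: ifP => HX.
  by rewrite add0r big1 // => t _; rewrite /= HX.
congr (_ + _).
idtac.
rewrite exchange_big /=; apply: eq_bigr => Y _.
by rewrite mulr_sumr.
Qed.

Lemma gsum_le_ht n X : ((gsum n X)%:E <= hitting_time opt Q X)%E.
Proof.
rewrite /hitting_time /gsum -sumEFin.
by apply: nneseries_lim_ge => k _ _; rewrite lee_fin notHit_ge0.
Qed.

Lemma ht_le_bound X b : (forall n, gsum n X <= b) ->
  (hitting_time opt Q X <= b%:E)%E.
Proof.
move=> H; rewrite /hitting_time; apply: lime_le.
  by apply: is_cvg_nneseries => k _ _; rewrite lee_fin notHit_ge0.
by apply: nearW => n /=; rewrite sumEFin lee_fin; apply: H.
Qed.

Lemma ht_ge0 X : (0 <= hitting_time opt Q X)%E.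
Proof. by apply: nneseries_ge0 => k _ _; rewrite lee_fin notHit_ge0. Qed.

Lemma ht_opt X : X \in opt -> hitting_time opt Q X = 0%E.
Proof.
move=> HX; rewrite /hitting_time eseries0 // => i _ _.
by rewrite notHit_opt.
Qed.

Lemma ht_eq X : X \notin opt ->
  hitting_time opt Q X =
  (1 + \sum_Y (Q X Y)%:E * hitting_time opt Q Y)%E.
Proof.
move=> HX; rewrite /hitting_time nneseries_recl //; last first.
  by move=> k _; rewrite lee_fin notHit_ge0.
rewrite /= (negbTE HX); congr (_ + _)%E.
rewrite -nneseries_addn; last by move=> i; rewrite lee_fin notHit_ge0.
under eq_eseriesr => i _ do rewrite addn1 /= (negbTE HX) -sumEFin.
rewrite nneseries_sum; last by move=> Y j _; rewrite lee_fin mulr_ge0 ?notHit_ge0.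
apply: eq_bigr => Y _.
under eq_eseriesr => i _ do rewrite EFinM.
by rewrite nneseriesZl // => i _; rewrite lee_fin notHit_ge0.
Qed.

End Helpers.

Section Harm.
Variables (R : realType) (S : finType) (opt : {set S}) (Q : S -> S -> R).
Hypothesis Q0 : forall X Y, 0 <= Q X Y.
Variable d : S -> R.
Hypothesis d0 : forall X, 0 <= d X.

Lemma super_bound :
  (forall X, X \notin opt -> 1 + \sum_Y Q X Y * d Y <= d X) ->
  forall n X, gsum opt Q n X <= d X.
Proof.
move=> Hs; elim=> [|n IH] X; first by rewrite gsum0.
rewrite gsumS; case: ifPn => HX //.
apply: le_trans (Hs X HX); rewrite lerD2l; apply: ler_sum => Y _.
by rewrite ler_wpM2l.
Qed.

Hypothesis dopt : forall X, X \in opt -> d X = 0.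

Fixpoint Fd n X := match n with
  | 0 => d X
  | n'.+1 => if X \in opt then 0 else \sum_Y Q X Y * Fd n' Y end.

Lemma d_le_sum X : d X <= \sum_Y d Y.
Proof.
rewrite (bigD1 X) //= lerDl; exact: sumr_ge0.
Qed.

Lemma Fd_le n X : Fd n X <= (\sum_Y d Y) * notHit opt Q n X.
Proof.
elim: n X => [|n IH] X /=; case: ifPn => HX.
- by rewrite dopt // mulr0.
- by rewrite mulr1 d_le_sum.
- by rewrite mulr0.
rewrite mulr_sumr; apply: ler_sum => Y _.
by rewrite mulrCA ler_wpM2l.
Qed.

Lemma sub_bound0 :
  (forall X, X \notin opt -> d X <= 1 + \sum_Y Q X Y * d Y) ->
  forall n X, d X <= gsum opt Q n X + Fd n X.
Proof.
move=> Hs; elim=> [|n IH] X; first by rewrite gsum0 add0r.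
rewrite gsumS /=; case: ifPn => HX; first by rewrite dopt // addr0.
apply: (le_trans (Hs X HX)); rewrite -addrA lerD2l -big_split /=.
apply: ler_sum => Y _; rewrite -mulrDr ler_wpM2l //.
Qed.

Lemma sub_bound :
  (forall X, X \notin opt -> d X <= 1 + \sum_Y Q X Y * d Y) ->
  forall X, ((d X)%:E <= hitting_time opt Q X)%E.
Proof.
move=> Hs X.
have gle := fun n => gsum_le_ht opt Q0 n X.
have hge := ht_ge0 opt Q0 X.
move: gle hge; case: (hitting_time opt Q X) => [r| |] gle hge; last 2 first.
- exact: leey.
- by [].
rewrite lee_fin; rewrite leNgt; apply/negP => Hlt.
have gr : forall n, gsum opt Q n X <= r by move=> n; rewrite -lee_fin.
set M := \sum_Y d Y.
set del := d X - r.
have del0 : 0 < del by rewrite subr_gt0.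
have Hn : forall n, del <= M * notHit opt Q n X.
  move=> n; apply: le_trans (Fd_le n X).
  rewrite /del lerBlDr addrC; apply: le_trans (sub_bound0 Hs n X) _.
  by rewrite lerD2r gr.
have r0 : 0 <= r by rewrite -lee_fin.
have HX : X \notin opt.
  by apply/negP => HX; move: Hlt; rewrite dopt // ltNge r0.
have M0 : 0 < M.
  have := Hn 0%N; rewrite /= (negbTE HX) mulr1 => H; exact: lt_le_trans del0 H.
have Hg : forall n, n%:R * (del / M) <= gsum opt Q n X.
  move=> n; have -> : n%:R * (del / M) = \sum_(0 <= t < n) (del / M).
    by rewrite sumr_const_nat subn0 mulr_natl.
  rewrite /gsum.
  apply: ler_sum => t _; rewrite ler_pdivrMr // mulrC; exact: Hn.
set K := r / (del / M).
have K0 : 0 <= K by rewrite divr_ge0 // ltW // divr_gt0.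
have := archi_boundP K0; set N := Num.Def.archi_bound K => HN.
have := le_trans (Hg N) (gr N).
rewrite -ler_pdivlMr ?divr_gt0 // -/K => HK.
by move: (lt_le_trans HN HK); rewrite ltxx.
Qed.

End Harm.

Unset Implicit Arguments.
From mathcomp Require Import ring lra.

Theorem mainTheorem1 (R : realType) (S : finType) (opt : {set S})
    (P1 P2 : S -> S -> R) (c : nat) :
  stochastic P1 -> stochastic P2 ->
  absorbing opt P1 -> absorbing opt P2 ->
  (forall X, hitting_time opt P1 X \is a fin_num) ->
  (0 < c)%N ->
  let d := fun X => fine (hitting_time opt P1 X) in
  ((exists X, X \notin opt /\ drift opt P1 d X < drift opt P2 d X) <->
   (exists p : S -> R, (forall X, 0 <= p X <= 1) /\
      (forall X, (hitting_time opt (mixed p P1 P2) X <= hitting_time opt P1 X)%E) /\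
      (exists X, (hitting_time opt (mixed p P1 P2) X < hitting_time opt P1 X)%E)))
  /\
  ((exists X, X \notin opt /\ drift opt P1 d X < drift opt P2 d X) <->
   (exists p : S -> R, (forall X, 0 <= p X <= 1) /\
      (forall X, (runtime c opt (mixed p P1 P2) X <= runtime c opt P1 X)%E) /\
      (exists X, (runtime c opt (mixed p P1 P2) X < runtime c opt P1 X)%E))).
Proof.
move=> [P1ge0 P1sum] [P2ge0 P2sum] abs1 abs2 fin c0 d.
have ht1 : forall X, hitting_time opt P1 X = (d X)%:E by move=> X; rewrite /d fineK.
have d0 : forall X, 0 <= d X by move=> X; rewrite -lee_fin -ht1 (ht_ge0 opt P1ge0).
have dopt : forall X, X \in opt -> d X = 0.
  by move=> X HX; have := ht1 X; rewrite (ht_opt P1) // => -[<-].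
have deq : forall X, X \notin opt -> d X = 1 + \sum_Y P1 X Y * d Y.
  move=> X HX; have := ht1 X; rewrite (ht_eq (opt:=opt) P1ge0) //.
  under eq_bigr => Y _ do rewrite ht1 -EFinM.
  by rewrite sumEFin -EFinD => -[<-].
have sumno : forall (P : S -> S -> R) X,
    \sum_(Y in ~: opt) P X Y * d Y = \sum_Y P X Y * d Y.
  move=> P X; rewrite [RHS](bigID (fun Y => Y \in ~: opt)) /= [X in _ = _ + X]big1 ?addr0 //.
  by move=> Y; rewrite inE negbK => HY; rewrite dopt // mulr0.
have dr1 : forall X, X \notin opt -> drift opt P1 d X = 1.
  by move=> X HX; rewrite /drift sumno {1}(deq X HX) addrK.
have eq12 : (exists X, X \notin opt /\ drift opt P1 d X < drift opt P2 d X) <->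
   (exists p : S -> R, (forall X, 0 <= p X <= 1) /\
      (forall X, (hitting_time opt (mixed p P1 P2) X <= hitting_time opt P1 X)%E) /\
      (exists X, (hitting_time opt (mixed p P1 P2) X < hitting_time opt P1 X)%E)).
  split.
  - case=> X0 [HX0 Hlt]; rewrite dr1 // /drift sumno in Hlt.
    have Hlt' : 1 + \sum_Y P2 X0 Y * d Y < d X0 by lra.
    pose p := fun X => if X == X0 then 0 else 1 : R.
    exists p; set Q := mixed p P1 P2.
    have QX : forall X Y, X != X0 -> Q X Y = P1 X Y.
      by move=> X Y HX; rewrite /Q /mixed /p (negbTE HX) subrr mul1r mul0r addr0.
    have QX0 : forall Y, Q X0 Y = P2 X0 Y.
      by move=> Y; rewrite /Q /mixed /p eqxx subr0 mul1r mul0r add0r.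
    have Q0 : forall X Y, 0 <= Q X Y.
      move=> X Y; case: (eqVneq X X0) => [->|HX]; first by rewrite QX0.
      by rewrite QX.
    have hs : forall X, X \notin opt -> 1 + \sum_Y Q X Y * d Y <= d X.
      move=> X HX; case: (eqVneq X X0) => [->|HXn].
        under eq_bigr => Y _ do rewrite QX0.
        exact: ltW.
      under eq_bigr => Y _ do rewrite QX //.
      by rewrite -deq.
    split; first by move=> X; rewrite /p /=; case: (X == X0); rewrite ?lexx ?ler01.
    split.
      move=> X; rewrite ht1; apply: (ht_le_bound (opt:=opt) Q0) => n.
      exact: (super_bound Q0 d0 hs).
    exists X0; rewrite ht1.
    apply: (le_lt_trans (ht_le_bound (opt:=opt) Q0 (b := 1 + \sum_Y Q X0 Y * d Y) _)).
      case=> [|n].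
        rewrite gsum0; apply: addr_ge0 => //; apply: sumr_ge0 => Y _.
        by rewrite mulr_ge0.
      rewrite gsumS (negbTE HX0) lerD2l; apply: ler_sum => Y _.
      by rewrite ler_wpM2l // (super_bound Q0 d0 hs).
    rewrite lte_fin; under eq_bigr => Y _ do rewrite QX0.
    exact: Hlt'.
  - case=> p [p01 [Hle [X1 Hlt1]]].
    apply: contrapT => Hn.
    have Hn' : forall X, X \notin opt -> drift opt P2 d X <= 1.
      move=> X HX; rewrite leNgt; apply/negP => H; apply: Hn; exists X.
      by rewrite dr1.
    set Q := mixed p P1 P2.
    have Q0 : forall X Y, 0 <= Q X Y.
      move=> X Y; rewrite /Q /mixed; have /andP[pa pb] := p01 X.
      by apply: addr_ge0; apply: mulr_ge0 => //; rewrite subr_ge0.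
    have hs : forall X, X \notin opt -> d X <= 1 + \sum_Y Q X Y * d Y.
      move=> X HX.
      have -> : \sum_Y Q X Y * d Y =
          p X * \sum_Y P1 X Y * d Y + (1 - p X) * \sum_Y P2 X Y * d Y.
        rewrite !mulr_sumr -big_split /=; apply: eq_bigr => Y _.
        by rewrite /Q /mixed mulrDl !mulrA.
      have := Hn' X HX; rewrite /drift sumno => H2.
      have H1 := deq X HX.
      have /andP[pa pb] := p01 X.
      have : (1 - p X) * (d X - 1) <= (1 - p X) * \sum_Y P2 X Y * d Y.
        by apply: ler_wpM2l; [rewrite subr_ge0 | lra].
      set s1 := \sum_Y P1 X Y * d Y.
      set s2 := \sum_Y P2 X Y * d Y.
      move: H1; rewrite -/s1 => H1 H3.
      have e1 : s1 = d X - 1 by lra.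
      have e2 : d X = 1 + (p X * (d X - 1) + (1 - p X) * (d X - 1)) by ring.
      by rewrite e1 {1}e2 lerD2l lerD2l.
    have := sub_bound Q0 d0 dopt hs X1.
    by move: Hlt1; rewrite ht1 => /lt_le_trans H /H; rewrite ltxx.
split; first exact: eq12.
rewrite eq12.
have cfin : ((c%:R : R)%:E \is a fin_num)%E by [].
have cpos : (0 < (c%:R : R)%:E)%E by rewrite lte_fin ltr0n.
split; case=> p [H1 [H2 [X H3]]]; exists p; split=> //; split.
- by move=> Y; rewrite /runtime lee_pmul2r.
- by exists X; rewrite /runtime lte_pmul2r.
- by move=> Y; move: (H2 Y); rewrite /runtime lee_pmul2r.
- by exists X; move: H3; rewrite /runtime lte_pmul2r.
Qed.
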